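(* Let $G\subset SO(3)$ be either the tetrahedral group $\mathbb{T}$ or the octahedral group $\mathbb{O}$ (in the coordinates fixed in the context), and let $R_{ij},R_{ji},R_i,R_j\in SO(3)$ satisfy the set equality $$\{R_{ij}^T g R_{ji} : g\in G\}=\{R_i^T g R_j : g\in G\}.$$ Then there exist $h_{ij},h_{ji}\in N_{SO(3)}(G)$ such that $R_{ij}=h_{ij}R_i$ and $R_{ji}=h_{ji}R_j$.
   Context: In the fixed coordinate system, $\mathbb{O}$ is the group of all $3\times 3$ signed permutation matrices (matrices with exactly one nonzero entry in each row and column, that entry being $\pm1$) having determinant $1$; it has 24 elements. $\mathbb{T}\subset\mathbb{O}$ is the 12-element subgroup consisting of the matrices $DP$ where $P$ is the permutation matrix of an even permutation of $\{1,2,3\}$ (identity or a 3-cycle) and $D$ is a diagonal matrix with diagonal entries $\pm1$ and $\det D=1$. For a subgroup $\tilde G$ of a group $\tilde H$, the normalizer is $N_{\tilde H}(\tilde G)=\{\tilde h\in\tilde H:\tilde h^T\tilde G\tilde h=\tilde G\}$ (for rotations, $\tilde h^T=\tilde h^{-1}$). *)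

(* Defs.v *)
From HB Require Import structures.
From mathcomp Require Import all_boot all_order all_algebra all_fingroup.
From mathcomp Require Import reals.
Set Implicit Arguments. Unset Strict Implicit. Unset Printing Implicit Defensive.
Import Order.TTheory GRing.Theory Num.Theory.
Local Open Scope ring_scope.

Section Defs.
Variable R : realType.

Definition is_SO3 (A : 'M[R]_3) : Prop := A^T *m A = 1%:M /\ \det A = 1.

Definition signed_perm_mx (A : 'M[R]_3) : Prop :=
  (forall i j, A i j = 0 \/ A i j = 1 \/ A i j = -1) /\
  (forall i, exists! j, A i j != 0) /\
  (forall j, exists! i, A i j != 0).

Definition octaG (A : 'M[R]_3) : Prop := signed_perm_mx A /\ \det A = 1.

Definition tetraG (A : 'M[R]_3) : Prop :=
  exists (d : 'rV[R]_3) (s : 'S_3),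
    (forall i, d 0 i = 1 \/ d 0 i = -1) /\ \det (diag_mx d) = 1 /\
    ~~ odd_perm s /\ A = diag_mx d *m perm_mx s.

Definition normalizer_SO3 (G : 'M[R]_3 -> Prop) (h : 'M[R]_3) : Prop :=
  is_SO3 h /\
  forall X, (exists g, G g /\ X = h^T *m g *m h) <-> G X.

End Defs.

(* Main.v *)
Require Import Defs.
From HB Require Import structures.
From mathcomp Require Import all_boot all_order all_algebra all_fingroup.
From mathcomp Require Import reals.
Import Order.TTheory GRing.Theory Num.Theory.
Local Open Scope ring_scope.

Set Implicit Arguments. Unset Strict Implicit.
Section Helpers.
Variable R : realType.
Implicit Types (d : 'rV[R]_3) (s : 'S_3) (A B X : 'M[R]_3).

Definition pm1 d := forall i, d 0 i = 1 \/ d 0 i = -1.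

Lemma DPE d s i j :
  (diag_mx d *m perm_mx s) i j = if s i == j then d 0 i else 0.
Proof.
rewrite mul_diag_mx !mxE; case: eqP => _; by rewrite ?mulr1 ?mulr0.
Qed.

Lemma perm_diag d s :
  perm_mx s *m diag_mx d = diag_mx (\row_i d 0 (s i)) *m perm_mx s.
Proof.
apply/matrixP => i j; rewrite DPE mul_mx_diag !mxE.
by case: eqP => [<-|_]; rewrite ?mul1r ?mul0r ?mxE.
Qed.

Lemma pm1_row d s : pm1 d -> pm1 (\row_i d 0 (s i)).
Proof. by move=> H i; rewrite mxE. Qed.

Lemma pm1_mul d1 d2 : pm1 d1 -> pm1 d2 -> pm1 (\row_i (d1 0 i * d2 0 i)).
Proof.
move=> H1 H2 i; rewrite mxE.
case: (H1 i) => ->; case: (H2 i) => ->;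
  rewrite ?mul1r ?mulr1 ?mulrNN ?mulr1; auto.
Qed.

Lemma det_row_perm d s : \det (diag_mx (\row_i d 0 (s i))) = \det (diag_mx d).
Proof.
rewrite !det_diag [RHS](reindex_inj (@perm_inj _ s)) /=.
by apply: eq_bigr => i _; rewrite mxE.
Qed.

Lemma diag_mul d1 d2 :
  diag_mx d1 *m diag_mx d2 = diag_mx (\row_i (d1 0 i * d2 0 i)).
Proof.
apply/matrixP => i j; rewrite mul_diag_mx !mxE.
case: eqP => _; by rewrite ?mulr1n ?mulr0n ?mulr0.
Qed.

Lemma det_diag_mul d1 d2 :
  \det (diag_mx (\row_i (d1 0 i * d2 0 i))) = \det (diag_mx d1) * \det (diag_mx d2).
Proof. by rewrite -diag_mul det_mulmx. Qed.

Lemma DP_mul d1 s1 d2 s2 :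
  diag_mx d1 *m perm_mx s1 *m (diag_mx d2 *m perm_mx s2) =
  diag_mx (\row_i (d1 0 i * (\row_k d2 0 (s1 k)) 0 i)) *m perm_mx (s1 * s2).
Proof.
rewrite mulmxA -(mulmxA _ (perm_mx s1)) perm_diag mulmxA diag_mul.
by rewrite -mulmxA -perm_mxM.
Qed.

Lemma DP_tr d s :
  (diag_mx d *m perm_mx s)^T = diag_mx (\row_i d 0 ((s^-1)%g i)) *m perm_mx (s^-1)%g.
Proof. by rewrite trmx_mul tr_diag_mx tr_perm_mx perm_diag. Qed.

Lemma pm1_sq d : pm1 d -> diag_mx d *m diag_mx d = 1%:M.
Proof.
move=> H; rewrite diag_mul; apply/matrixP => i j; rewrite !mxE.
case: eqP => _; rewrite ?mulr1n ?mulr0n //.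
by case: (H i) => ->; rewrite ?mulr1 ?mulrNN ?mulr1.
Qed.

Lemma DP_orth d s : pm1 d ->
  (diag_mx d *m perm_mx s)^T *m (diag_mx d *m perm_mx s) = 1%:M.
Proof.
move=> H; rewrite trmx_mul tr_diag_mx tr_perm_mx mulmxA.
by rewrite -(mulmxA (perm_mx _)) pm1_sq // mulmx1 -perm_mxM mulVg perm_mx1.
Qed.

Lemma DP_sp d s : pm1 d -> signed_perm_mx (diag_mx d *m perm_mx s).
Proof.
move=> H; split; [|split].
- move=> i j; rewrite DPE; case: eqP => _; auto.
- move=> i; exists (s i); split.
    rewrite DPE eqxx; by case: (H i) => ->; rewrite ?oner_eq0 ?oppr_eq0 ?oner_eq0.
  move=> x; rewrite DPE; case: (s i =P x) => // _; by rewrite eqxx.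
- move=> j; exists ((s^-1)%g j); split.
    rewrite DPE permKV eqxx; by case: (H ((s^-1)%g j)) => ->; rewrite ?oner_eq0 ?oppr_eq0 ?oner_eq0.
  move=> x; rewrite DPE; case: (s x =P j) => [<- _|_]; first by rewrite permK.
  by rewrite eqxx.
Qed.

Lemma sp_DP A : signed_perm_mx A ->
  exists d s, pm1 d /\ A = diag_mx d *m perm_mx s.
Proof.
case=> Hent [Hrow Hcol].
pose f i := odflt ord0 [pick j | A i j != 0].
have Hf i : A i (f i) != 0.
  rewrite /f; case: pickP => [j //|H].
  have [j [Hj _]] := Hrow i; by rewrite H in Hj.
have Hf2 i j : A i j != 0 -> j = f i.
  move=> Hij; have [j0 [_ U]] := Hrow i.
  by rewrite -(U j Hij) (U (f i) (Hf i)).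
have finj : injective f.
  move=> i1 i2 E; have [i0 [_ U]] := Hcol (f i1).
  rewrite -(U i1 (Hf i1)); apply: U; rewrite E; exact: Hf.
exists (\row_i A i (f i)), (perm finj); split.
  move=> i; rewrite mxE; have := Hf i.
  by case: (Hent i (f i)) => [->|[->|->]]; rewrite ?eqxx; auto.
apply/matrixP => i j; rewrite DPE permE mxE.
case: eqP => [<- //|ne].
have [//|[E|E]] := Hent i j; exfalso; apply: ne; symmetry; apply: Hf2;
  by rewrite E ?oppr_eq0 oner_eq0.
Qed.

Definition goodG (G : 'M[R]_3 -> Prop) :=
  [/\ G 1%:M, (forall a b, G a -> G b -> G (a *m b)),
      (forall a, G a -> G a^T) &
      (forall a, G a -> a^T *m a = 1%:M /\ \det a = 1)].

Lemma det_DP d s : \det (diag_mx d *m perm_mx s) = \det (diag_mx d) * (-1) ^+ s.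
Proof. by rewrite det_mulmx det_perm. Qed.

Lemma tetra_good : goodG (@tetraG R).
Proof.
split.
- exists (const_mx 1), 1%g; split; [by move=> i; rewrite mxE; left|].
  rewrite diag_const_mx det1; split => //; split; first by rewrite odd_perm1.
  by rewrite perm_mx1 mulmx1.
- move=> a b [d1 [s1 [H1 [D1 [O1 ->]]]]] [d2 [s2 [H2 [D2 [O2 ->]]]]].
  rewrite DP_mul; do 2 eexists; split; last split; last split; last reflexivity.
  + by apply: pm1_mul => //; apply: pm1_row.
  + by rewrite det_diag_mul det_row_perm D1 D2 mulr1.
  + by rewrite odd_permM (negbTE O1) (negbTE O2).
- move=> a [d [s [H [D [O ->]]]]]; rewrite DP_tr.
  do 2 eexists; split; last split; last split; last reflexivity.
  + exact: pm1_row.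
  + by rewrite det_row_perm.
  + by rewrite odd_permV.
- move=> a [d [s [H [D [O ->]]]]]; split; first exact: DP_orth.
  by rewrite det_DP D (negbTE O) expr0 mulr1.
Qed.

Lemma octa_good : goodG (@octaG R).
Proof.
split.
- split; last by rewrite det1.
  have := @DP_sp (const_mx 1) 1%g; rewrite diag_const_mx perm_mx1 mulmx1.
  by apply => i; rewrite mxE; left.
- move=> a b [Sa Da] [Sb Db]; split; last by rewrite det_mulmx Da Db mulr1.
  have [d1 [s1 [H1 ->]]] := sp_DP Sa; have [d2 [s2 [H2 ->]]] := sp_DP Sb.
  by rewrite DP_mul; apply: DP_sp; apply: pm1_mul => //; apply: pm1_row.
- move=> a [Sa Da]; split; last by rewrite det_tr.
  have [d [s [H ->]]] := sp_DP Sa; rewrite DP_tr; apply: DP_sp; exact: pm1_row.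
- move=> a [Sa Da]; split => //.
  have [d [s [H ->]]] := sp_DP Sa; exact: DP_orth.
Qed.

End Helpers.

Section Main.
Variable R : realType.
Implicit Types (A P Q X Y : 'M[R]_3).

Lemma cancel_conj P Q X : P *m P^T = 1%:M -> Q *m Q^T = 1%:M ->
  P *m (P^T *m X *m Q) *m Q^T = X.
Proof. by move=> H1 H2; rewrite !mulmxA H1 mul1mx -mulmxA H2 mulmx1. Qed.

Lemma cR1 X P : P^T *m P = 1%:M -> X *m P^T *m P = X.
Proof. by move=> H; rewrite -mulmxA H mulmx1. Qed.

Lemma cR2 X P : P *m P^T = 1%:M -> X *m P *m P^T = X.
Proof. by move=> H; rewrite -mulmxA H mulmx1. Qed.

Lemma orthT P : is_SO3 P -> P *m P^T = 1%:M.
Proof. by case=> H _; apply: mulmx1C. Qed.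

Lemma main_gen (G : 'M[R]_3 -> Prop) (HG : goodG G)
  (Rij Rji Ri Rj : 'M[R]_3)
  (Hij : is_SO3 Rij) (Hji : is_SO3 Rji) (Hi : is_SO3 Ri) (Hj : is_SO3 Rj)
  (Hset : forall X : 'M[R]_3,
      (exists g, G g /\ X = Rij^T *m g *m Rji) <->
      (exists g, G g /\ X = Ri^T *m g *m Rj)) :
  exists hij hji : 'M[R]_3,
    normalizer_SO3 G hij /\ normalizer_SO3 G hji /\
    Rij = hij *m Ri /\ Rji = hji *m Rj.
Proof.
case: HG => G1 GM GT GO.
have Hij1 := Hij.1; have Hji1 := Hji.1; have Hi1 := Hi.1; have Hj1 := Hj.1.
have Hij2 := orthT Hij; have Hji2 := orthT Hji; have Hi2 := orthT Hi; have Hj2 := orthT Hj.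
have [g0 [Gg0 E0]] := proj2 (Hset (Ri^T *m 1%:M *m Rj)) (ex_intro _ 1%:M (conj G1 erefl)).
have [g01 dg0] := GO _ Gg0.
have g02 : g0 *m g0^T = 1%:M by apply: mulmx1C.
pose A := Rij *m Ri^T.
have AtA : A^T *m A = 1%:M.
  by rewrite /A trmx_mul trmxK !mulmxA (cR1 _ Hij1) Hi2.
have dA : \det A = 1 by rewrite /A det_mulmx det_tr Hij.2 Hi.2 mulr1.
have eg0 : g0 = Rij *m Ri^T *m Rj *m Rji^T.
  by rewrite -[g0](cancel_conj _ Hij2 Hji2) -E0 mulmx1 !mulmxA.
pose B := g0^T *m A.
have g0A : Rji = B *m Rj.
  rewrite /B /A eg0 !trmx_mul !trmxK !mulmxA (cR1 _ Hij1) (cR2 _ Hi2).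
  by rewrite (cR1 _ Hj1).
have eB : B = Rji *m Rj^T by rewrite g0A (cR2 _ Hj2).
have F1 g : G g -> G (A^T *m g *m B).
  move=> Gg.
  have [g' [Gg' E]] := proj1 (Hset (Rij^T *m g *m Rji)) (ex_intro _ g (conj Gg erefl)).
  have -> : A^T *m g *m B = g'.
    by rewrite -[g'](cancel_conj _ Hi2 Hj2) -E eB /A trmx_mul trmxK !mulmxA.
  exact: Gg'.
have F2 g : G g -> G (A *m g *m B^T).
  move=> Gg.
  have [g' [Gg' E]] := proj2 (Hset (Ri^T *m g *m Rj)) (ex_intro _ g (conj Gg erefl)).
  have -> : A *m g *m B^T = g'.
    by rewrite -[g'](cancel_conj _ Hij2 Hji2) -E eB /A trmx_mul trmxK !mulmxA.
  exact: Gg'.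
have defB : B = g0^T *m A by [].
have defA : A = Rij *m Ri^T by [].
clearbody B A.
have NA : normalizer_SO3 G A.
  split; first by split.
  move=> X; split.
    case=> g [Gg ->].
    have := F1 _ (GM _ _ Gg Gg0).
    by rewrite defB !mulmxA (cR2 _ g02).
  move=> GX; exists (A *m X *m B^T *m g0^T); split.
    by apply: (GM); [apply: (F2)|apply: (GT)].
  rewrite defB trmx_mul trmxK !mulmxA AtA mul1mx (cR2 _ g02).
  by rewrite (cR1 _ AtA).
exists A, B; split => //; split; last split => //.
  split.
    split; first by rewrite defB trmx_mul trmxK !mulmxA (cR2 _ g02) AtA.
    by rewrite defB det_mulmx det_tr dg0 dA mulr1.
  move=> X; split.
    case=> g [Gg ->]; apply/(proj1 (NA.2 _)).
    exists (g0 *m g *m g0^T); split; first by apply: (GM); [apply: (GM)|apply: (GT)].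
    by rewrite defB trmx_mul trmxK !mulmxA.
  move=> GX; have [y [Gy ->]] := proj2 (NA.2 X) GX.
  exists (g0^T *m y *m g0); split; first by apply: (GM) => //; apply: (GM) => //; apply: (GT).
  by rewrite defB trmx_mul trmxK !mulmxA (cR2 _ g02) (cR2 _ g02).
by rewrite defA -mulmxA Hi1 mulmx1.
Qed.

End Main.

Theorem proposition1 (R : realType) (G : 'M[R]_3 -> Prop)
  (HG : G = tetraG (R:=R) \/ G = octaG (R:=R))
  (Rij Rji Ri Rj : 'M[R]_3)
  (Hij : is_SO3 Rij) (Hji : is_SO3 Rji) (Hi : is_SO3 Ri) (Hj : is_SO3 Rj)
  (Hset : forall X : 'M[R]_3,
      (exists g, G g /\ X = Rij^T *m g *m Rji) <->
      (exists g, G g /\ X = Ri^T *m g *m Rj)) :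
  exists hij hji : 'M[R]_3,
    normalizer_SO3 G hij /\ normalizer_SO3 G hji /\
    Rij = hij *m Ri /\ Rji = hji *m Rj.
Proof.
apply: main_gen => //.
by case: HG => ->; [apply: tetra_good | apply: octa_good].
Qed.
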